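(* Let $\mu$ be a centrally symmetric Borel probability measure on the unit sphere $S^2\subset\mathbb R^3$ (i.e. $\mu(-E)=\mu(E)$ for Borel $E$). For $\mathbf n_0\in\mathbb R^3$ with $|\mathbf n_0|\le1$, $\lambda\in[-1,1]$ and a Borel function $g:S^2\to[0,1]$, define $$x_0(\lambda,\mathbf n_0,g)=\int\big[1_{\mathbf n_0^T\mathbf n>\lambda}(\mathbf n)+g(\mathbf n)1_{\mathbf n_0^T\mathbf n=\lambda}(\mathbf n)\big]\,d\mu(\mathbf n),\qquad \mathbf b(\lambda,\mathbf n_0,g)=\int\big[1_{\mathbf n_0^T\mathbf n>\lambda}(\mathbf n)+g(\mathbf n)1_{\mathbf n_0^T\mathbf n=\lambda}(\mathbf n)\big]\,\mathbf n\,d\mu(\mathbf n).$$ If $x_0(\lambda,\mathbf n_0,g)=\tfrac12$, then $\mathbf b(0,\mathbf n_0,g)=\mathbf b(\lambda,\mathbf n_0,g)$.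
   Context: $1_X$ denotes the indicator function of a set $X\subseteq S^2$. (In the paper, the points $(x_0,\mathbf b)$ parametrize the boundary of the box generated by the ansatz $\mu$, and $x_0=\tfrac12$ is the cross-section relevant for T-states.) *)

(* Defs.v *)
From HB Require Import structures.
From mathcomp Require Import all_boot all_order all_algebra.
From mathcomp Require Import all_classical all_reals all_analysis.
Set Implicit Arguments. Unset Strict Implicit. Unset Printing Implicit Defensive.
Import Order.TTheory GRing.Theory Num.Theory.
Local Open Scope classical_set_scope.
Local Open Scope ring_scope.

(* Points of R^3 are represented as triples ((x, y), z), with the product
   (= Borel) sigma-algebra. *)

Definition dot3 {R : realType} (a b : R * R * R) : R :=
  a.1.1 * b.1.1 + a.1.2 * b.1.2 + a.2 * b.2.

Definition sphere2 (R : realType) : set (R * R * R) := [set x | dot3 x x = 1].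

Definition neg3 {R : realType} (x : R * R * R) : R * R * R :=
  (- x.1.1, - x.1.2, - x.2).

Definition centrally_symmetric {R : realType}
  (mu : set (R * R * R) -> \bar R) : Prop :=
  forall E : set (R * R * R), measurable E -> mu (neg3 @^-1` E) = mu E.

Definition weight {R : realType} (lam : R) (n0 : R * R * R)
  (g : R * R * R -> R) (n : R * R * R) : R :=
  (if lam < dot3 n0 n then 1 else 0) + g n * (if dot3 n0 n == lam then 1 else 0).

Definition x0 {R : realType} (mu : probability (R * R * R)%type R) (lam : R)
  (n0 : R * R * R) (g : R * R * R -> R) : R :=
  Rintegral mu setT (weight lam n0 g).

Definition bvec {R : realType} (mu : probability (R * R * R)%type R) (lam : R)
  (n0 : R * R * R) (g : R * R * R -> R) : R * R * R :=
  (Rintegral mu setT (fun n => weight lam n0 g n * n.1.1),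
   Rintegral mu setT (fun n => weight lam n0 g n * n.1.2),
   Rintegral mu setT (fun n => weight lam n0 g n * n.2)).

(* Main.v *)
Require Import Defs.
From HB Require Import structures.
From mathcomp Require Import all_boot all_order all_algebra.
From mathcomp Require Import all_classical all_reals all_analysis.
From mathcomp Require Import measurable_realfun.
From mathcomp Require Import lra.
Import Order.TTheory GRing.Theory Num.Theory.
Local Open Scope classical_set_scope.
Local Open Scope ring_scope.

Section S.
Context (R : realType).


Lemma mdot (n0 : R * R * R) : measurable_fun setT (fun n : R * R * R => dot3 n0 n).
Proof.
rewrite /dot3.
have m11 : measurable_fun setT (fun n : R * R * R => n.1.1).
  exact: (measurableT_comp measurable_fst measurable_fst).
have m12 : measurable_fun setT (fun n : R * R * R => n.1.2).
  exact: (measurableT_comp measurable_snd measurable_fst).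
have m2 : measurable_fun setT (fun n : R * R * R => n.2) by exact: measurable_snd.
apply: measurable_realfun.measurable_funD; first apply: measurable_realfun.measurable_funD.
- exact: measurable_realfun.measurable_funM.
- exact: measurable_realfun.measurable_funM.
- exact: measurable_realfun.measurable_funM.
Qed.

Lemma mweight (lam : R) (n0 : R*R*R) (g : R * R * R -> R) : measurable_fun setT g ->
  measurable_fun setT (weight lam n0 g).
Proof.
move=> mg; rewrite /weight; apply: measurable_realfun.measurable_funD.
  apply: measurable_fun_ifT => //; apply: measurable_realfun.measurable_fun_ltr => //; exact: mdot.
apply: measurable_realfun.measurable_funM => //.
apply: measurable_fun_ifT => //; apply: measurable_realfun.measurable_fun_eqr => //; exact: mdot.
Qed.

Lemma bint (mu : probability (R * R * R)%type R) (f : R * R * R -> R) (M : R) :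
  measurable_fun setT f -> (forall x, `|f x| <= M) ->
  mu.-integrable setT (EFin \o f).
Proof.
move=> mf fM; apply: measurable_bounded_integrable => //.
  by rewrite ltey_eq fin_num_measure.
exists M; split; first exact: num_real.
move=> K KM x _; exact: (le_trans (fM x) (ltW KM)).
Qed.


Lemma weight01 (lam : R) (n0 : R*R*R) (g : R*R*R -> R) n :
  (forall n, 0 <= g n <= 1) -> 0 <= weight lam n0 g n <= 1.
Proof.
move=> Hg; have /andP[g0 g1] := Hg n; rewrite /weight.
case: ltrgtP => h; rewrite ?mulr0 ?mulr1 ?addr0 ?add0r ?g0 ?g1 ?ler01 //.
all: by rewrite ?lexx.
Qed.

Lemma Rint_indic (mu : probability (R * R * R)%type R) (A : set (R*R*R)) :
  measurable A -> \int[mu]_x (\1_A x) = fine (mu A).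
Proof. by move=> mA; rewrite /Rintegral integral_indic// setIT. Qed.

Lemma mset (n0 : R*R*R) (P : R -> bool) (i : interval R) :
  (forall x, P x = (x \in i)) -> measurable [set n | P (dot3 n0 n)].
Proof.
move=> hP; have := mdot n0 measurableT _ (measurable_itv i).
rewrite setTI; congr measurable; apply/seteqP; split=> x /=; by rewrite hP.
Qed.


Lemma ae_from (mu : probability (R * R * R)%type R) (f1 f2 : R*R*R -> R) :
  measurable_fun setT f1 -> measurable_fun setT f2 ->
  mu.-integrable setT (EFin \o f1) -> mu.-integrable setT (EFin \o f2) ->
  (forall x, f2 x <= f1 x) -> \int[mu]_x f1 x = \int[mu]_x f2 x ->
  {ae mu, forall x, setT x -> f1 x = f2 x}.
Proof.
move=> m1 m2 i1 i2 le12 eq12.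
have mD : measurable_fun setT (fun x => f1 x - f2 x).
  exact: measurable_realfun.measurable_funB.
have iD : mu.-integrable setT (EFin \o (fun x => f1 x - f2 x)).
  have := integrableB measurableT i1 i2.
  by apply: eq_integrable => // x _.
have : (\int[mu]_x `|((EFin \o (fun x => (f1 x - f2 x)%R)) x)| = 0)%E.
  rewrite (eq_integral (EFin \o (fun x => (f1 x - f2 x)%R))); last first.
    by move=> x _ /=; rewrite ger0_norm // subr_ge0.
  rewrite -(fineK (integrable_fin_num measurableT iD)).
  have -> : fine (\int[mu]_x (EFin \o (fun x => (f1 x - f2 x)%R)) x)%E =
     \int[mu]_x (f1 x - f2 x) by [].
  by rewrite RintegralB // eq12 subrr.
have mE : measurable_fun setT (EFin \o (fun x => (f1 x - f2 x)%R)).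
  by apply/measurable_EFinP.
move=> H0; have h := proj1 (ae_eq_integral_abs mu measurableT mE) H0.
apply: filterS h => x hx Tx; move: (hx Tx) => /= [] /eqP; rewrite subr_eq0 => /eqP.
done.
Qed.

Lemma indic_set (b : R*R*R -> bool) x :
  \1_[set y | b y] x = (if b x then 1 else 0 : R).
Proof.
rewrite indicE; case: (boolP (b x)) => h.
  by rewrite mem_set.
by rewrite memNset //= => /(negP h).
Qed.

End S.

Theorem lemma3 (R : realType) (mu : probability (R * R * R)%type R)
  (Hsupp : mu (~` @sphere2 R) = 0%E)
  (Hsym : centrally_symmetric mu)
  (n0 : R * R * R) (Hn0 : dot3 n0 n0 <= 1)
  (lam : R) (Hlam : -1 <= lam <= 1)
  (g : R * R * R -> R) (Hgm : measurable_fun setT g)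
  (Hg01 : forall n, 0 <= g n <= 1) :
  x0 mu lam n0 g = 1 / 2 -> bvec mu 0 n0 g = bvec mu lam n0 g.
Proof.
move=> H12.
have mw : forall l, measurable_fun setT (weight l n0 g) := fun l => @mweight R l n0 g Hgm.
have iw : forall l, mu.-integrable setT (EFin \o weight l n0 g).
  move=> l; apply: (@bint R mu _ 1) => // x.
  by have /andP[h0 h1] := @weight01 R l n0 g x Hg01; rewrite ger0_norm.
pose P := [set n | 0 < dot3 n0 n].
pose Q := [set n | dot3 n0 n < 0].
pose Q' := [set n | 0 <= dot3 n0 n].
have mP : measurable P by apply: (@mset R n0 _ ( `]0, +oo[)) => x; rewrite in_itv /= andbT.
have mQ : measurable Q by apply: (@mset R n0 (fun x => x < 0) `]-oo, 0[) => x; rewrite in_itv /=.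
have mQ' : measurable Q' by apply: (@mset R n0 _ ( `[0, +oo[)) => x; rewrite in_itv /= andbT.
have PQ : mu P = mu Q.
  rewrite -(Hsym Q mQ); congr (mu _); apply/seteqP; split => x /=.
  1,2: rewrite /P /Q /= /dot3 /neg3 /= => h; nra.
have Q'Q : Q' = ~` Q.
  by apply/seteqP; split => x; rewrite /Q' /Q /= leNgt => /negP.
set a := fine (mu P).
have muP : mu P = a%:E by rewrite fineK // fin_num_measure.
have muQ' : fine (mu Q') = 1 - a.
  by rewrite Q'Q probability_setC // -PQ muP.
have ha0 : a <= x0 mu 0 n0 g.
  rewrite /a -(@Rint_indic R mu P mP); apply: le_Rintegral => //.
    1,2: by first [exact: (iw 0) | exact: integrable_indic].
  move=> x _; rewrite indic_set /weight.
  have /andP[g0 g1] := Hg01 x.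
  case: ltrgtP => h; rewrite ?mulr0 ?mulr1 ?addr0; lra.
have ha1 : x0 mu 0 n0 g <= 1 - a.
  rewrite -muQ' -(@Rint_indic R mu Q' mQ'); apply: le_Rintegral => //.
    1,2: by first [exact: (iw 0) | exact: integrable_indic].
  move=> x _; rewrite indic_set /weight.
  have /andP[g0 g1] := Hg01 x.
  case: ltrgtP => h; rewrite ?mulr0 ?mulr1 ?addr0; lra.
have x00 : x0 mu 0 n0 g = 1 / 2.
  case: (ltrgtP 0 lam) => hl.
  - have : x0 mu lam n0 g <= a.
      rewrite /a -(@Rint_indic R mu P mP); apply: le_Rintegral => //.
        1,2: by first [exact: (iw lam) | exact: integrable_indic].
      move=> x _; rewrite indic_set /weight.
      have /andP[g0 g1] := Hg01 x.
      case: (ltrgtP lam) => h; case: (ltrgtP 0) => h'; rewrite ?mulr0 ?mulr1 ?addr0; lra.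
    lra.
  - have : 1 - a <= x0 mu lam n0 g.
      rewrite -muQ' -(@Rint_indic R mu Q' mQ'); apply: le_Rintegral => //.
        1,2: by first [exact: (iw lam) | exact: integrable_indic].
      move=> x _; rewrite indic_set /weight.
      have /andP[g0 g1] := Hg01 x.
      case: (ltrgtP lam) => h; case: (ltrgtP 0) => h'; rewrite ?mulr0 ?mulr1 ?addr0; lra.
    lra.
  - by rewrite hl.
have hae : {ae mu, forall x, setT x -> weight 0 n0 g x = weight lam n0 g x}.
  case: (leP 0 lam) => hl.
    apply: ae_from => //; last exact: (etrans x00 (esym H12)).
    move=> x; rewrite /weight; have /andP[g0 g1] := Hg01 x.
    case: (ltrgtP lam) => h; case: (ltrgtP 0) => h'; rewrite ?mulr0 ?mulr1 ?addr0; lra.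
  have : {ae mu, forall x, setT x -> weight lam n0 g x = weight 0 n0 g x}.
    apply: ae_from => //; last exact: (etrans H12 (esym x00)).
    move=> x; rewrite /weight; have /andP[g0 g1] := Hg01 x.
    case: (ltrgtP lam) => h; case: (ltrgtP 0) => h'; rewrite ?mulr0 ?mulr1 ?addr0; lra.
  by apply: filterS => x h /h ->.
have mc1 : measurable_fun setT (fun n : R * R * R => n.1.1).
  exact: (measurableT_comp measurable_fst measurable_fst).
have mc2 : measurable_fun setT (fun n : R * R * R => n.1.2).
  exact: (measurableT_comp measurable_snd measurable_fst).
have mc3 : measurable_fun setT (fun n : R * R * R => n.2) by exact: measurable_snd.
rewrite /bvec; congr (_, _, _); rewrite /Rintegral; congr fine;
  (apply: ae_eq_integral => //;
   [ apply/measurable_EFinP; exact: measurable_funM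
   | apply/measurable_EFinP; exact: measurable_funM
   | by apply: filterS hae => x h /h /= -> ]).
Qed.
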